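(* For any composition $\alpha$ of a positive integer $n$, \[\sum_{j=0}^{\lfloor n/2\rfloor}(-1)^{\ell_+^{2j}(\alpha)+r_-^{2j}(\alpha)}\,C\bigl(\ell_+^{2j}(\alpha),\,j-\ell_+^{2j}(\alpha)\bigr)\,C\bigl(r_-^{2j}(\alpha),\,\lfloor n/2\rfloor-j-r_-^{2j}(\alpha)\bigr)=\begin{cases}4^{\lfloor n/2\rfloor}&\text{if }\alpha=(n),\\0&\text{otherwise,}\end{cases}\] and \[\sum_{i=0}^n\frac{(-1)^{\ell_-^i(\alpha)+r_-^i(\alpha)+i}}{4^{\lfloor i/2\rfloor+\lfloor (n-i)/2\rfloor}}\,C\bigl(\ell_-^i(\alpha),\,\lfloor i/2\rfloor-\ell_-^i(\alpha)\bigr)\,C\bigl(r_-^i(\alpha),\,\lfloor (n-i)/2\rfloor-r_-^i(\alpha)\bigr)=0.\]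
   Context: A composition $\alpha=(a_1,\ldots,a_k)$ of $n$ is a sequence of positive integers with sum $n$; it corresponds bijectively to its descent set $D(\alpha)=\{a_1,a_1+a_2,\ldots,a_1+\cdots+a_{k-1}\}\subseteq\{1,\ldots,n-1\}$. For $0\le i\le n$, let $L_i(\alpha)$ be the composition of $i$ with descent set $D(\alpha)\cap\{1,\ldots,i-1\}$ and $R_i(\alpha)$ the composition of $n-i$ with descent set $\{d-i: d\in D(\alpha),\ d>i\}$ (so $L_0(\alpha)=R_n(\alpha)=()$, the empty composition); these are the two pieces obtained by cutting the ribbon diagram of $\alpha$ after its first $i$ cells. Statistics: $p_-(\beta)=\#\{i\ne k: b_i>1\}$ for $\beta=(b_1,\ldots,b_k)$; $p_+(\beta)=1+\#\{i\ne1,k: b_i>1\}$ if $k>1$ and $p_+(\beta)=0$ if $k\le1$. Set $\ell_\pm^i(\alpha)=p_\pm(L_i(\alpha))$ and $r_\pm^i(\alpha)=p_\pm(R_i(\alpha))$. $C(p,q)=\frac{(2p)!(2q)!}{p!(p+q)!q!}$. *)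

(* Defs.v *)
From mathcomp Require Import all_boot all_order all_algebra.
Set Implicit Arguments. Unset Strict Implicit. Unset Printing Implicit Defensive.
Import GRing.Theory Num.Theory.

Definition is_composition (n : nat) (a : seq nat) : Prop :=
  all (fun x => 0 < x) a /\ sumn a = n.

Definition descents (a : seq nat) : seq nat :=
  [seq sumn (take k a) | k <- iota 1 (size a).-1].

(* The composition of m whose descent set is D (D a subset of {1,...,m-1}).
   For m = 0 this is the empty composition. *)
Definition comp_of_descents (m : nat) (D : seq nat) : seq nat :=
  if m == 0 then [::]
  else pairmap (fun x y => y - x) 0 (rcons (sort leq (undup D)) m).

(* L_i(alpha): composition of i with descent set D(alpha) ∩ {1,...,i-1}. *)
Definition Lcut (i : nat) (a : seq nat) : seq nat :=
  comp_of_descents i [seq d <- descents a | (0 < d) && (d < i)].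

(* R_i(alpha): composition of n-i with descent set {d - i : d in D(alpha), d > i}. *)
Definition Rcut (i : nat) (a : seq nat) : seq nat :=
  comp_of_descents (sumn a - i) [seq d - i | d <- descents a & i < d].

Definition p_minus (b : seq nat) : nat :=
  count (fun x => 1 < x) (take (size b).-1 b).

Definition p_plus (b : seq nat) : nat :=
  if 1 < size b then (count (fun x => 1 < x) (drop 1 (take (size b).-1 b))).+1
  else 0.

Definition lplus i a := p_plus (Lcut i a).
Definition lminus i a := p_minus (Lcut i a).
Definition rplus i a := p_plus (Rcut i a).
Definition rminus i a := p_minus (Rcut i a).

Definition superC (p q : nat) : rat :=
  ((p.*2)`! * (q.*2)`!)%:R / (p`! * (p + q)`! * q`!)%:R.

(* Main.v *)
Require Import Defs.
From mathcomp Require Import all_boot all_order all_algebra.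
From mathcomp Require Import zify ring lra.
Import GRing.Theory Num.Theory.
Local Open Scope ring_scope.

Lemma factr_neq0 (n : nat) : (n`!)%:R != 0 :> rat.
Proof. by rewrite pnatr_eq0 -lt0n fact_gt0. Qed.

Lemma natS_r (n : nat) : (n.+1)%:R = n%:R + 1 :> rat.
Proof. by rewrite -addn1 natrD. Qed.

Lemma superC_rec (p q : nat) :
  superC p.+1 q + superC p q.+1 = 4%:R * superC p q.
Proof.
rewrite /superC !doubleS addSn addnS !factS !natrM.
have h1 := factr_neq0 p. have h2 := factr_neq0 q. have h3 := factr_neq0 (p+q).
have h4 : (p%:R + 1) != 0 :> rat by rewrite -natS_r pnatr_eq0.
have h5 : (q%:R + 1) != 0 :> rat by rewrite -natS_r pnatr_eq0.
have h6 : (p%:R + q%:R + 1) != 0 :> rat by rewrite -natrD -natS_r pnatr_eq0.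
rewrite !natS_r -!muln2 !natrM natrD.
field.
by rewrite h1 h2 h3 h4 h5 h6.
Qed.

Definition g0 (N : nat) : rat := superC 0 N / 4%:R ^+ N.
Fixpoint gg (p N : nat) : rat :=
  match p with
  | 0 => g0 N
  | p'.+1 => gg p' N - (if N is N'.+1 then gg p' N' else 0)
  end.

Lemma four_pow_neq0 N : 4%:R ^+ N != 0 :> rat.
Proof. by rewrite expf_neq0 // pnatr_eq0. Qed.

Lemma gg_link p N : (p <= N)%N ->
  gg p N = (-1) ^+ p * superC p (N - p) / 4%:R ^+ N.
Proof.
elim: p N => [|p IH] N hp.
  by rewrite /= /g0 expr0 mul1r subn0.
case: N hp => [//|N] hp; rewrite ltnS in hp.
rewrite /= -/(gg p N.+1) IH ?(leqW hp) // IH // subSS subSn //.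
have := superC_rec p (N - p).
move=> E.
have -> : superC p.+1 (N - p) = 4%:R * superC p (N - p) - superC p (N - p).+1.
  by rewrite -E addrK.
have h := four_pow_neq0 N.
rewrite !exprS.
by field.
Qed.

Lemma c_rec j : (j.+1)%:R * superC 0 j.+1 = (4%:R * j%:R + 2%:R) * superC 0 j.
Proof.
rewrite /superC !add0n doubleS !factS !natrM.
have h1 := factr_neq0 j.
have h4 : (j%:R + 1) != 0 :> rat by rewrite -natS_r pnatr_eq0.
rewrite !natS_r -!muln2 !natrM.
field.
by rewrite h1 h4.
Qed.

Lemma conv_c h : \sum_(0 <= j < h.+1) superC 0 j * superC 0 (h - j) = 4%:R ^+ h.
Proof.
pose c := superC 0.
pose T (h : nat) := \sum_(0 <= j < h.+1) c j * c (h - j)%N.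
pose W (h : nat) := \sum_(0 <= j < h.+1) (j%:R : rat) * (c j * c (h - j)%N).
have HW : forall h, 2%:R * W h = h%:R * T h.
  move=> k.
  have Hrev : W k = \sum_(0 <= j < k.+1) (((k - j)%N)%:R : rat) * (c j * c (k - j)%N).
    rewrite /W big_nat_rev /=; apply: eq_big_nat => j /andP[_ hj].
    rewrite add0n subSS; congr (_ * _); rewrite subKn 1?mulrC // -ltnS.

  rewrite mulr2n mulrDl mul1r {2}Hrev /W -big_split /= /T mulr_sumr.
  apply: eq_big_nat => j /andP[_ hj].
  by rewrite -mulrDl -natrD subnKC // -ltnS.
have HT : forall h, T h.+1 = 4%:R * T h.
  move=> k.
  have E1 : W k.+1 = 4%:R * W k + 2%:R * T k.
    rewrite /W big_nat_recl // mul0r add0r /T /W !mulr_sumr -big_split /=.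
    apply: eq_big_nat => j /andP[_ hj].
    rewrite subSS mulrA c_rec /c; ring.
  have E2 := HW k.+1. have E3 := HW k. rewrite E1 in E2.
  have hk : (k.+1)%:R != 0 :> rat by rewrite pnatr_eq0.
  apply: (mulfI hk); rewrite -E2 natS_r.
  transitivity (4%:R * (2%:R * W k) + 4%:R * T k); first by ring.
  rewrite E3; ring.
elim: h => [|h IH].
  by rewrite big_nat1 /superC.
by have := HT h; rewrite /T => ->; rewrite IH exprS.
Qed.


Definition cntL (Q : seq nat) (i : nat) := count (fun q => q.+2 <= i)%N Q.
Definition cntR (Q : seq nat) (i : nat) := count (fun q => i < q)%N Q.
Definition Sw (w : nat -> rat) (n : nat) (Q : seq nat) : rat :=
  \sum_(0 <= i < n.+1) w i * gg (cntL Q i) i./2 * gg (cntR Q i) (n - i)%N./2.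

Lemma ggS p N : gg p.+1 N.+1 = gg p N.+1 - gg p N.
Proof. by []. Qed.

Lemma split3 (F : nat -> rat) a b c : (a <= b)%N -> (b <= c)%N ->
  \sum_(0 <= i < c) F i = \sum_(0 <= i < a) F i + \sum_(a <= i < b) F i + \sum_(b <= i < c) F i.
Proof. by move=> h1 h2; rewrite -big_cat_nat ?(leq_trans h1 h2) // -big_cat_nat. Qed.

Lemma split2 (F : nat -> rat) a c : (a <= c)%N ->
  \sum_(0 <= i < c) F i = \sum_(0 <= i < a) F i + \sum_(a <= i < c) F i.
Proof. by move=> h1; rewrite -big_cat_nat. Qed.

Lemma shift2 (F : nat -> rat) a b :
  \sum_(a.+2 <= i < b.+2) F i = \sum_(a <= i < b) F i.+2.
Proof.
rewrite -(addn2 a) big_addn.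
have -> : (b.+2 - 2 = b)%N by lia.
by apply: eq_bigr => i _; rewrite addn2.
Qed.

Lemma Sw_rec w n Q0 q : (forall i, w i.+2 = w i) ->
  all (fun x => x.+2 <= q)%N Q0 -> (q.+2 <= n)%N ->
  Sw w n (rcons Q0 q) = Sw w n Q0 - Sw w (n - 2) Q0.
Proof.
move=> hw hQ hqn.
case: n hqn => [|[|m]] // hqn.
rewrite (_ : (m.+2 - 2)%N = m); last by lia.
have cL : forall i, cntL (rcons Q0 q) i = (cntL Q0 i + (q.+2 <= i))%N.
  by move=> i; rewrite /cntL -cats1 count_cat /= addn0.
have cR : forall i, cntR (rcons Q0 q) i = (cntR Q0 i + (i < q))%N.
  by move=> i; rewrite /cntR -cats1 count_cat /= addn0.
have cR0 : forall i, (q <= i)%N -> cntR Q0 i = 0%N.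
  move=> i hi; rewrite /cntR; apply/eqP; rewrite -leqn0 leqNgt -has_count.
  apply/hasPn => x /(allP hQ) hx; rewrite -leqNgt; lia.
have cLs : forall i, (q <= i)%N -> cntL Q0 i = size Q0.
  move=> i hi; rewrite /cntL -[RHS]count_predT; apply: eq_in_count => x /(allP hQ) hx.
  by rewrite /= (leq_trans hx hi).
rewrite /Sw.
have h1 : (q <= q.+2)%N by lia.
have h2 : (q.+2 <= m.+3)%N by lia.
have h3 : (q <= m.+1)%N by lia.
rewrite [LHS](@split3 _ _ _ _ h1 h2) [X in _ = X - _](@split3 _ _ _ _ h1 h2) [X in _ = _ - X](@split2 _ _ _ h3).
rewrite !shift2.
set B1 := \sum_(0 <= i < q) _.
set B2 := \sum_(q <= i < q.+2) _.
set B3 := \sum_(q <= i < m.+1) _.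
set C1 := \sum_(0 <= i < q) _.
set C3 := \sum_(q <= i < m.+1) _.
set A1 := \sum_(0 <= i < q) _.
set A2 := \sum_(q <= i < q.+2) _.
set A3 := \sum_(q <= i < m.+1) _.
have e1 : B1 = C1 - A1.
  rewrite /B1 /C1 /A1 -sumrB; apply: eq_big_nat => i /andP[_ hi].
  rewrite !cL !cR.
  rewrite (_ : (q.+2 <= i)%N = false); last by lia.
  rewrite (_ : (i < q)%N = true); last by lia.
  rewrite !addn0 !addn1.
  have -> : ((m.+2 - i) = (m - i).+2)%N by lia.
  have -> : ((m - i).+2)./2 = ((m - i)./2).+1 by [].
  by rewrite ggS; ring.
have e2 : B2 = A2.
  apply: eq_big_nat => i /andP[hi1 hi2].
  rewrite !cL !cR.
  rewrite (_ : (q.+2 <= i)%N = false); last by lia.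
  rewrite (_ : (i < q)%N = false); last by lia.
  by rewrite !addn0.
have e3 : B3 = C3 - A3.
  rewrite /B3 /C3 /A3 -sumrB; apply: eq_big_nat => i /andP[hi _].
  rewrite !cL !cR !cR0 ?cLs; try lia.
  rewrite (_ : (q.+2 <= i.+2)%N = true); last by lia.
  rewrite (_ : (i.+2 < q)%N = false); last by lia.
  rewrite !addn0 !addn1 hw subSS.
  have -> : (i.+2)./2 = (i./2).+1 by [].
  by rewrite ggS; ring.
rewrite e1 e2 e3; ring.
Qed.


Lemma pair_sum (F : nat -> rat) k :
  \sum_(0 <= i < k.*2) F i = \sum_(0 <= j < k) (F j.*2 + F j.*2.+1).
Proof.
elim: k => [|k IH]; first by rewrite !big_geq.
by rewrite doubleS !big_nat_recr //= IH addrA.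
Qed.

Lemma pair_sum1 (F : nat -> rat) k :
  \sum_(0 <= i < (k.*2).+1) F i = \sum_(0 <= j < k.+1) (F j.*2 + F j.*2.+1) - F (k.*2).+1.
Proof. by rewrite -pair_sum doubleS [in RHS]big_nat_recr //= addrK. Qed.

Lemma conv_g0 h : \sum_(0 <= j < h.+1) g0 j * g0 (h - j)%N = 1.
Proof.
have h4 := four_pow_neq0 h.
transitivity (\sum_(0 <= j < h.+1) superC 0 j * superC 0 (h - j) / 4%:R ^+ h).
  apply: eq_big_nat => j /andP[_ hj].
  rewrite /g0 -[in RHS](subnKC (_ : j <= h)%N) ?exprD; last by lia.
  have := four_pow_neq0 j; have := four_pow_neq0 (h - j).
  by move=> ? ?; rewrite addKn; field; apply/andP.
by rewrite -mulr_suml conv_c divff.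
Qed.

Lemma half_dd h j : (j <= h)%N -> ((h.*2 - j.*2)./2 = h - j)%N.
Proof. by move=> hj; rewrite -doubleB doubleK. Qed.

Lemma half_dd1 h j : (j <= h)%N -> (((h.*2).+1 - j.*2)./2 = h - j)%N.
Proof.
move=> hj; rewrite subSn ?leq_double // -doubleB -addn1 halfD odd_double doubleK /=.
by rewrite addn0.
Qed.

Definition we (i : nat) : rat := (~~ odd i)%:R.
Definition wa (i : nat) : rat := (-1) ^+ i.

Lemma Sw_we_nil n : Sw we n [::] = 1.
Proof.
rewrite /Sw /cntL /cntR /=.
rewrite -[n]odd_double_half; set h := n./2.
case: (odd n) => /=.
- rewrite add1n -doubleS pair_sum -(conv_g0 h).
  apply: eq_big_nat => j /andP[_ hj]; rewrite /we /= !odd_double /= !mul0r mul1r addr0 doubleK.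
  congr (_ * g0 _).
  by rewrite half_dd1 //; lia.
- rewrite add0n pair_sum1 -(conv_g0 h) /we /= odd_double /= !mul0r subr0.
  apply: eq_big_nat => j /andP[_ hj]; rewrite /= !odd_double /= !mul0r mul1r addr0 doubleK.
  congr (_ * g0 _).
  by rewrite half_dd //; lia.
Qed.

Lemma half_d1 j : ((j.*2).+1)./2 = j.
Proof. by rewrite -addn1 halfD odd_double doubleK /= addn0. Qed.

Lemma sgn_even j : (-1) ^+ j.*2 = 1 :> rat.
Proof. by rewrite -signr_odd odd_double expr0. Qed.
Lemma sgn_odd j : (-1) ^+ (j.*2).+1 = -1 :> rat.
Proof. by rewrite -signr_odd /= odd_double expr1. Qed.

Lemma Sw_wa_nil n : Sw wa n [::] = (n == 0)%N%:R.
Proof.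
rewrite /Sw /cntL /cntR /=.
rewrite -[n]odd_double_half; set h := n./2.
case: (odd n) => /=.
- rewrite add1n -doubleS pair_sum big_nat_cond big1 //.
  move=> j /andP[/andP[_ hj] _]; rewrite /wa half_d1 doubleK subSS -doubleB doubleK.
  rewrite sgn_even sgn_odd (_ : (h.*2.+1 - j.*2)%N = ((h - j).*2).+1).
    by rewrite half_d1; ring.
  by rewrite -!muln2; lia.
- rewrite add0n pair_sum1 /wa.
  rewrite (_ : \sum_(0 <= j < h.+1) _ = \sum_(0 <= j < h.+1) (g0 j * g0 (h - j)%N)
     - \sum_(0 <= j < h.+1) (g0 j * g0 ((h.*2 - (j.*2).+1)./2)%N)); last first.
    rewrite -sumrB; apply: eq_big_nat => j /andP[_ hj].
    have hjh : (j <= h)%N by lia.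
    rewrite sgn_even sgn_odd half_d1 doubleK (half_dd _ _ hjh).
    ring.
  rewrite conv_g0 big_nat_recr // half_d1 sgn_odd.
  rewrite (_ : (h.*2 - (h.*2).+1 = 0)%N); last by lia.
  case: h => [|k].
    by rewrite big_geq //= ; ring.
  rewrite (_ : \sum_(0 <= j < k.+1) _ = \sum_(0 <= j < k.+1) (g0 j * g0 (k - j)%N)).
    rewrite conv_g0 /=; ring.
  apply: eq_big_nat => j /andP[_ hj]; congr (_ * g0 _).
  rewrite doubleS (_ : ((k.*2).+2 - (j.*2).+1)%N = ((k - j).*2).+1) ?half_d1 //.
  by rewrite -!muln2; lia.
Qed.

Definition gapped (Q : seq nat) := pairwise (fun x y => x.+2 <= y)%N Q.

Lemma gapped_rcons Q0 q : gapped (rcons Q0 q) ->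
  gapped Q0 /\ all (fun x => x.+2 <= q)%N Q0.
Proof.
rewrite /gapped -cats1 pairwise_cat /= => /and3P[hr hp _]; split => //.
by move: hr; rewrite /allrel; apply: sub_all => x /=; rewrite andbT.
Qed.

Lemma Sw_we_all n Q : gapped Q -> all (fun x => x.+2 <= n)%N Q ->
  Sw we n Q = (Q == [::])%:R.
Proof.
elim/last_ind: Q n => [|Q0 q IH] n; first by move=> _ _; rewrite Sw_we_nil.
move=> /gapped_rcons [hg ha] hn.
have hqn : (q.+2 <= n)%N by move: hn; rewrite all_rcons => /andP[].
rewrite Sw_rec //; last by move=> i; rewrite /we /= negbK.
rewrite !IH //; last first.
  apply/allP => x hx; have := allP ha x hx; lia.
  apply/allP => x hx; have := allP ha x hx; lia.
by rewrite subrr; case: Q0 {IH hg ha hn}.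
Qed.

Lemma Sw_wa_all n Q : gapped Q -> all (fun x => (0 < x) && (x.+2 <= n))%N Q ->
  Sw wa n Q = (n == 0)%N%:R.
Proof.
elim/last_ind: Q n => [|Q0 q IH] n; first by move=> _ _; rewrite Sw_wa_nil.
move=> /gapped_rcons [hg ha] hn.
have /andP[hq0 hqn] : ((0 < q) && (q.+2 <= n))%N by move: hn; rewrite all_rcons => /andP[].
have hn' : all (fun x => (0 < x) && (x.+2 <= n))%N Q0 by move: hn; rewrite all_rcons => /andP[].
rewrite Sw_rec //; last by move=> i; rewrite /wa exprS exprS mulrA mulrNN mulr1 mul1r.
rewrite !IH //; last first.
  apply/allP => x hx; have := allP ha x hx; have := allP hn' x hx; lia.
rewrite (_ : (n == 0)%N = false); last by lia.
rewrite (_ : (n - 2 == 0)%N = false); last by lia.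
by rewrite subrr.
Qed.

Lemma gapped_size Q m M : gapped Q -> all (fun x => (m <= x) && (x.+2 <= M))%N Q ->
  (size Q <= (M - m)./2)%N.
Proof.
elim: Q m => [//|x Q IH] m /=; rewrite /gapped /= => /andP[hx hg] /andP[/andP[hmx hxM] ha].
have := IH x.+2 hg.
have -> : all (fun y => (x.+2 <= y) && (y.+2 <= M))%N Q.
  apply/allP => y hy; rewrite (allP hx y hy) /=; exact: (andP (allP ha y hy)).2.
move=> /(_ isT) h; rewrite -!divn2 in h *; lia.
Qed.

Lemma cntL_bound Q i : gapped Q -> (cntL Q i <= i./2)%N.
Proof.
move=> hg; rewrite /cntL -size_filter.
apply: (@leq_trans ((i - 0)./2)); last by rewrite subn0.
apply: gapped_size; first exact: pairwise_filter.
by apply/allP => x; rewrite mem_filter => /andP[-> _].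
Qed.

Lemma cntR_bound Q n i : gapped Q -> all (fun x => x.+2 <= n)%N Q ->
  (cntR Q i <= (n - i)./2)%N.
Proof.
move=> hg ha; rewrite /cntR -size_filter.
apply: (@leq_trans ((n - i.+1)./2)).
  apply: gapped_size; first exact: pairwise_filter.
  by apply/allP => x; rewrite mem_filter => /andP[-> hx]; rewrite (allP ha x hx).
rewrite -!divn2; lia.
Qed.


Local Open Scope nat_scope.

Lemma countG x0 s : pairwise ltn (x0 :: s) ->
  count (fun y => 1 < y) (pairmap (fun x y => y - x) x0 s) =
  count (fun d => d.-1 \notin x0 :: s) s.
Proof.
elim: s x0 => [//|d s IH] x0 /= /andP[/andP[hx0d hx0s] /andP[hds hs]].
rewrite IH /=; last by rewrite hds hs.
rewrite !inE.
have -> : (d.-1 \in s) = false.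
  by apply/negbTE/negP => /(allP hds) /=; lia.
congr (nat_of_bool _ + _).
  lia.
apply: eq_in_count => e he /=.
have := allP hds e he; have := allP hx0s e he; rewrite !inE => h1 h2.
by have -> : (e.-1 == x0) = false by lia.
Qed.

Lemma pairmap_rcons (f : nat -> nat -> nat) x s y :
  pairmap f x (rcons s y) = rcons (pairmap f x s) (f (last x s) y).
Proof. by elim: s x => [//|z s IH] x /=; rewrite IH. Qed.

Definition dif := fun x y : nat => y - x.

Lemma pminus_pm D m : p_minus (pairmap dif 0 (rcons D m)) = count (fun y => 1 < y) (pairmap dif 0 D).
Proof.
rewrite /p_minus size_pairmap size_rcons /= pairmap_rcons -cats1 take_size_cat //.
by rewrite size_pairmap.
Qed.

Lemma pplus_pm D m : p_plus (pairmap dif 0 (rcons D m)) =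
  if D is d :: D' then (count (fun y => 1 < y) (pairmap dif d D')).+1 else 0.
Proof.
rewrite /p_plus size_pairmap size_rcons /= pairmap_rcons -cats1 take_size_cat ?size_pairmap //.
by case: D => [|d D] //=; rewrite drop0.
Qed.
Lemma comp_of_sorted m D : m != 0 -> pairwise ltn D ->
  comp_of_descents m D = pairmap dif 0 (rcons D m).
Proof.
move=> hm hD; rewrite /comp_of_descents (negbTE hm).
have hs : sorted ltn D by rewrite sorted_pairwise //; exact: ltn_trans.
move: (hs); rewrite ltn_sorted_uniq_leq => /andP[hu hl].
by rewrite undup_id // sorted_sort //; exact: leq_trans.
Qed.

Lemma descents_cons x a : descents (x :: a) =
  if a is [::] then [::] else x :: [seq x + d | d <- descents a].
Proof.
rewrite /descents; case: a => [|y l] //=.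
rewrite addn0; congr (_ :: _).
rewrite (iotaDl 1 1) -!map_comp; apply: eq_map => k /=.
by rewrite add0n.
Qed.
Lemma descents_prop a : all (fun x => 0 < x) a ->
  pairwise ltn (descents a) && all (fun d => (0 < d) && (d < sumn a)) (descents a).
Proof.
elim: a => [//|x a IH] /= /andP[hx ha].
rewrite descents_cons; case: a IH ha => [//|y l] IH ha.
move: (IH ha) => /andP[hp hb] /=.
have hy : 0 < y by move: ha => /= /andP[].
have hsum : 0 < sumn (y :: l) by rewrite /= (leq_trans hy) ?leq_addr.
apply/and3P; split.
- apply/andP; split.
    rewrite all_map; apply/allP => d hd /=; have := allP hb d hd; lia.
  rewrite pairwise_map; apply: sub_pairwise hp => u v /=; lia.
- apply/andP; split; first lia.
  have : sumn (y :: l) = y + sumn l by []. lia.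
- rewrite all_map; apply/allP => d hd /=; have := allP hb d hd.
  have : sumn (y :: l) = y + sumn l by []. lia.
Qed.

Lemma pplus_count DL m : pairwise ltn (0 :: DL) ->
  p_plus (pairmap dif 0 (rcons DL m)) = count (fun d => d.-1 \notin DL) DL.
Proof.
rewrite pplus_pm; case: DL => [//|d D'] /= /andP[/andP[hd0 h0D'] /andP[hdD' hD']].
rewrite countG; last by rewrite /= hdD' hD'.
rewrite inE.
have -> : (d.-1 \in D') = false.
  by apply/negbTE/negP => /(allP hdD') /=; lia.
by have -> : (d.-1 == d) = false by lia.
Qed.

Lemma hpw_of a : all (fun x => 0 < x) a -> pairwise ltn (descents a).
Proof. by move=> ha; have /andP[] := descents_prop a ha. Qed.
Lemma hb_of a : all (fun x => 0 < x) a -> all (fun d => (0 < d) && (d < sumn a)) (descents a).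
Proof. by move=> ha; have /andP[] := descents_prop a ha. Qed.

Lemma count_lt0 (a : seq nat) (P : pred nat) : count (fun d => P d && (d < 0)) (descents a) = 0.
Proof. by rewrite (eq_count (a2 := pred0)) ?count_pred0 // => d; rewrite ltn0 andbF. Qed.

Lemma lminus_eq (a : seq nat) (ha : all (fun x => 0 < x) a) i : lminus i a = count (fun d => (d.-1 \notin 0 :: (descents a)) && (d < i)) (descents a).
Proof.
have hpw := hpw_of a ha; have hb := hb_of a ha; set D := descents a.
rewrite /lminus /Lcut -/D.
case: i => [|i]; first by rewrite /comp_of_descents /= count_lt0.
set DL := [seq d <- D | _].
have hDL : pairwise ltn DL := pairwise_filter _ hpw.
rewrite comp_of_sorted // pminus_pm countG; last first.
  rewrite /= hDL andbT; apply/allP => d; rewrite mem_filter => /andP[/andP[h _] _]; exact h.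
rewrite /DL count_filter; apply: eq_in_count => d hd /=.
have := allP hb d hd; rewrite !inE mem_filter.
case hm: (d.-1 \in D); last by rewrite /=; lia.
have := allP hb _ hm; rewrite /=; lia.
Qed.

Lemma lplus_eq (a : seq nat) (ha : all (fun x => 0 < x) a) i : lplus i a = count (fun d => (d.-1 \notin (descents a)) && (d < i)) (descents a).
Proof.
have hpw := hpw_of a ha; have hb := hb_of a ha; set D := descents a.
rewrite /lplus /Lcut -/D.
case: i => [|i]; first by rewrite /comp_of_descents /= count_lt0.
set DL := [seq d <- D | _].
have hDL : pairwise ltn DL := pairwise_filter _ hpw.
rewrite comp_of_sorted // pplus_count; last first.
  rewrite /= hDL andbT; apply/allP => d; rewrite mem_filter => /andP[/andP[h _] _]; exact h.
rewrite /DL count_filter; apply: eq_in_count => d hd /=.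
have := allP hb d hd; rewrite mem_filter.
case hm: (d.-1 \in D); last by rewrite /=; lia.
have := allP hb _ hm; rewrite /=; lia.
Qed.

Lemma rminus_eq (a : seq nat) (ha : all (fun x => 0 < x) a) i : rminus i a = count (fun d => (d.-1 \notin 0 :: (descents a)) && (i.+1 < d)) (descents a).
Proof.
have hpw := hpw_of a ha; have hb := hb_of a ha; set D := descents a.
rewrite /rminus /Rcut -/D.
set DR := [seq d - i | d <- D & i < d].
case: (eqVneq (sumn a - i) 0) => hz.
  rewrite hz /comp_of_descents /=.
  rewrite (eq_in_count (a2 := pred0)) ?count_pred0 // => d hd.
  have := allP hb d hd; rewrite /=; lia.
have hDR : pairwise ltn DR.
  rewrite pairwise_map.
  have hf : pairwise ltn [seq d <- D | i < d] := pairwise_filter _ hpw.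
  have hP : all (fun d => i < d) [seq d <- D | i < d].
    by apply/allP => d; rewrite mem_filter => /andP[].
  apply: (sub_in_pairwise _ hP hf) => u v /= hu hv; lia.
rewrite comp_of_sorted // pminus_pm countG; last first.
  rewrite /= hDR andbT all_map; apply/allP => d; rewrite mem_filter => /andP[h _] /=; lia.
rewrite {1}/DR count_map count_filter; apply: eq_in_count => d hd /=.
have := allP hb d hd; rewrite !inE.
case: (ltnP i.+1 d) => hid; last by rewrite /=; lia.
have -> : ((d - i).-1 \in DR) = (d.-1 \in D).
  apply/mapP/idP => [[d' hd' e]|hm].
    by move: hd'; rewrite mem_filter => /andP[h1 h2]; have -> : d.-1 = d' by lia.
  by exists d.-1; rewrite ?mem_filter ?hm ?andbT; lia.
by case: (d.-1 \in D); rewrite /=; lia.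
Qed.

Definition Qm (a : seq nat) := [seq d.-1 | d <- descents a & d.-1 \notin 0 :: descents a].
Definition Qp (a : seq nat) := [seq d.-1 | d <- descents a & d.-1 \notin descents a].

Lemma cntL_Qm (a : seq nat) (ha : all (fun x => 0 < x) a) i : cntL (Qm a) i = lminus i a.
Proof.
have hpw := hpw_of a ha; have hb := hb_of a ha; set D := descents a.
rewrite (lminus_eq a ha) /cntL /Qm count_map count_filter; apply: eq_in_count => d hd /=.
have := allP hb d hd; rewrite /=; lia.
Qed.

Lemma cntR_Qm (a : seq nat) (ha : all (fun x => 0 < x) a) i : cntR (Qm a) i = rminus i a.
Proof.
have hpw := hpw_of a ha; have hb := hb_of a ha; set D := descents a.
rewrite (rminus_eq a ha) /cntR /Qm count_map count_filter; apply: eq_in_count => d hd /=.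
have := allP hb d hd; rewrite /=; lia.
Qed.

Lemma cntL_Qp (a : seq nat) (ha : all (fun x => 0 < x) a) i : cntL (Qp a) i = lplus i a.
Proof.
have hpw := hpw_of a ha; have hb := hb_of a ha; set D := descents a.
rewrite (lplus_eq a ha) /cntL /Qp count_map count_filter; apply: eq_in_count => d hd /=.
have := allP hb d hd; rewrite /=; lia.
Qed.

Lemma cntR_Qp (a : seq nat) (ha : all (fun x => 0 < x) a) i : cntR (Qp a) i = rminus i a.
Proof.
have hpw := hpw_of a ha; have hb := hb_of a ha; set D := descents a.
rewrite (rminus_eq a ha) /cntR /Qp count_map count_filter; apply: eq_in_count => d hd /=.
have := allP hb d hd; rewrite inE /=; lia.
Qed.

Lemma gapped_Qp (a : seq nat) (ha : all (fun x => 0 < x) a) : gapped (Qp a).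
Proof.
have hpw := hpw_of a ha; have hb := hb_of a ha; set D := descents a.
rewrite /gapped /Qp pairwise_map.
have hf : pairwise ltn [seq d <- D | d.-1 \notin D] := pairwise_filter _ hpw.
have hP : all (fun d => (d \in D) && (d.-1 \notin D)) [seq d <- D | d.-1 \notin D].
  by apply/allP => d; rewrite mem_filter => /andP[h1 h2]; rewrite h1 h2.
apply: (sub_in_pairwise _ hP hf) => u v /andP[hu _] /andP[_ hv] /= huv.
have hne : u != v.-1 by apply/eqP => e; rewrite -e hu in hv.
have := allP hb u hu; lia.
Qed.

Lemma gapped_Qm (a : seq nat) (ha : all (fun x => 0 < x) a) : gapped (Qm a).
Proof.
have hpw := hpw_of a ha; have hb := hb_of a ha; set D := descents a.
rewrite /gapped /Qm pairwise_map.
have hf : pairwise ltn [seq d <- D | d.-1 \notin 0 :: D] := pairwise_filter _ hpw.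
have hP : all (fun d => (d \in D) && (d.-1 \notin 0 :: D)) [seq d <- D | d.-1 \notin 0 :: D].
  by apply/allP => d; rewrite mem_filter => /andP[h1 h2]; rewrite h1 h2.
apply: (sub_in_pairwise _ hP hf) => u v /andP[hu _] /andP[_ hv] /= huv.
rewrite inE negb_or in hv; move: hv => /andP[_ hv].
have hne : u != v.-1 by apply/eqP => e; rewrite -e hu in hv.
have := allP hb u hu; lia.
Qed.

Lemma Qm_bounds (a : seq nat) (ha : all (fun x => 0 < x) a) : all (fun x => (0 < x) && (x.+2 <= sumn a)) (Qm a).
Proof.
have hpw := hpw_of a ha; have hb := hb_of a ha; set D := descents a.
rewrite /Qm all_map; apply/allP => d; rewrite mem_filter inE negb_or => /andP[/andP[h0 _] hd] /=.
have := allP hb d hd; lia.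
Qed.

Lemma Qp_bounds (a : seq nat) (ha : all (fun x => 0 < x) a) : all (fun x => x.+2 <= sumn a) (Qp a).
Proof.
have hpw := hpw_of a ha; have hb := hb_of a ha; set D := descents a.
rewrite /Qp all_map; apply/allP => d; rewrite mem_filter => /andP[_ hd] /=.
have := allP hb d hd; lia.
Qed.

Lemma Qp_nil (a : seq nat) (ha : all (fun x => 0 < x) a) : ((Qp a) == [::]) = ((descents a) == [::]).
Proof.
have := hpw_of a ha; have := hb_of a ha; rewrite /Qp.
case: (descents a) => [//|d D'] /= /andP[/andP[hd0 _] _] /andP[hdD' _].
rewrite inE.
have -> : (d.-1 \in D') = false.
  by apply/negbTE/negP => /(allP hdD') /=; lia.
by have -> : (d.-1 == d) = false by lia.
Qed.



Lemma descents_nil a n : (0 < n) -> sumn a = n -> (descents a == [::]) = (a == [:: n]).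
Proof.
move=> hn hs; rewrite -size_eq0 /descents size_map size_iota.
case: a hs => [|x [|y l]] /= hs; first by lia.
  by rewrite addn0 in hs; rewrite hs !eqxx.
by rewrite eqseq_cons andbC.
Qed.



Local Open Scope ring_scope.

Lemma sum_even (F : nat -> rat) n :
  \sum_(0 <= i < n.+1) we i * F i = \sum_(0 <= j < (n./2).+1) F j.*2.
Proof.
rewrite -[n in LHS]odd_double_half; set h := n./2.
case: (odd n).
- rewrite add1n -doubleS pair_sum; apply: eq_big_nat => j _.
  by rewrite /we /= !odd_double /= mul1r mul0r addr0.
- rewrite add0n pair_sum1 /we /= odd_double /= mul0r subr0.
  by apply: eq_big_nat => j _; rewrite /= !odd_double /= mul1r mul0r addr0.
Qed.

Lemma half_sub n j : ((n - j.*2)./2 = n./2 - j)%N.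
Proof. rewrite -!divn2 -muln2; lia. Qed.

Theorem proposition6p1 (n : nat) (a : seq nat) :
  (0 < n)%N -> is_composition n a ->
  (\sum_(0 <= j < (n./2).+1)
      (-1) ^+ (lplus j.*2 a + rminus j.*2 a)
      * superC (lplus j.*2 a) (j - lplus j.*2 a)
      * superC (rminus j.*2 a) (n./2 - j - rminus j.*2 a)
   = if a == [:: n] then 4%:R ^+ n./2 else 0 :> rat)
  /\
  (\sum_(0 <= i < n.+1)
      (-1) ^+ (lminus i a + rminus i a + i) / 4%:R ^+ (i./2 + (n - i)./2)
      * superC (lminus i a) (i./2 - lminus i a)
      * superC (rminus i a) ((n - i)./2 - rminus i a)
   = 0 :> rat).
Proof.
move=> hn [ha hs].
have gQp := gapped_Qp a ha.
have gQm := gapped_Qm a ha.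
have bQp := Qp_bounds a ha; rewrite hs in bQp.
have bQm := Qm_bounds a ha; rewrite hs in bQm.
split.
- have E : Sw we n (Qp a) = \sum_(0 <= j < (n./2).+1)
      gg (lplus j.*2 a) j * gg (rminus j.*2 a) (n./2 - j).
    rewrite /Sw (eq_bigr (fun i => we i * (gg (cntL (Qp a) i) i./2 * gg (cntR (Qp a) i) (n - i)./2)));
      last by move=> i _; rewrite mulrA.
    rewrite sum_even; apply: eq_big_nat => j /andP[_ hj].
    by rewrite doubleK (cntL_Qp a ha) (cntR_Qp a ha) half_sub.
  have -> : (if a == [:: n] then 4%:R ^+ n./2 else 0 :> rat) = 4%:R ^+ n./2 * Sw we n (Qp a).
    rewrite Sw_we_all // (Qp_nil a ha) (@descents_nil a n hn hs).
    by case: (a == [:: n]); rewrite ?mulr1 ?mulr0.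
  rewrite E mulr_sumr; apply: eq_big_nat => j /andP[_ hj].
  have hjn : (j <= n./2)%N by lia.
  have hl : (lplus j.*2 a <= j)%N.
    by rewrite -(cntL_Qp a ha); have := cntL_bound _ (j.*2) gQp; rewrite doubleK.
  have hr : (rminus j.*2 a <= n./2 - j)%N.
    by rewrite -(cntR_Qp a ha); have := cntR_bound _ _ (j.*2) gQp bQp; rewrite half_sub.
  rewrite !gg_link //.
  rewrite -[in 4%:R ^+ n./2](subnKC hjn) exprD exprD.
  have := four_pow_neq0 j; have := four_pow_neq0 (n./2 - j).
  by move=> h1 h2; field; apply/andP.
- transitivity (Sw wa n (Qm a)); last first.
    by rewrite Sw_wa_all // (_ : (n == 0)%N = false) //; lia.
  rewrite /Sw; apply: eq_big_nat => i /andP[_ hi].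
  have hl : (lminus i a <= i./2)%N.
    by rewrite -(cntL_Qm a ha); apply: cntL_bound.
  have hr : (rminus i a <= (n - i)./2)%N.
    rewrite -(cntR_Qm a ha); apply: cntR_bound => //.
    by apply: sub_all bQm => x /andP[].
  rewrite -(cntL_Qm a ha) -(cntR_Qm a ha) in hl hr *.
  rewrite !gg_link // /wa !exprD.
  have := four_pow_neq0 (i./2); have := four_pow_neq0 ((n - i)./2).
  by move=> h1 h2; field; apply/andP.
Qed.
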